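(* For every integer $a\geq 2$, $$\sum_{n\geq 1}\frac{H_n}{(2n+1)^{2a-1}}=-2\lambda(2a-1)\ln 2+\Big(a-\frac12\Big)\lambda(2a)-\sum_{q=1}^{a-2}\lambda(2q+1)\lambda(2a-2q-1),$$ where an empty sum equals $0$.
   Context: $H_n=1+\frac12+\cdots+\frac1n$ is the $n$-th harmonic number. For real $s>1$, $\lambda(s)=\sum_{n\geq 1}\frac{1}{(2n-1)^s}=(1-2^{-s})\zeta(s)$. *)

(* Defs.v *)
From Stdlib Require Import Reals Lra Lia List.
From Coquelicot Require Import Coquelicot.
Open Scope R_scope.

Fixpoint harmonic (n : nat) : R :=
  match n with
  | O => 0
  | S m => harmonic m + / INR (S m)
  end.

Definition dlambda (s : nat) : R :=
  Series (fun k : nat => / (INR (2 * k + 1)) ^ s).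

Definition sum_range (m len : nat) (f : nat -> R) : R :=
  fold_right Rplus 0 (map f (seq m len)).

(* Main.v *)
Require Import Defs.
From Stdlib Require Import Reals Lra Lia List.
From Coquelicot Require Import Coquelicot.
Open Scope R_scope.

Lemma ln_le_sub1 y : 0 < y -> ln y <= y - 1.
Proof. intros H. pose proof (exp_ineq1_le (ln y)). rewrite exp_ln in H0; lra. Qed.

Lemma harmonic_S n : harmonic (S n) = harmonic n + / INR (S n).
Proof. reflexivity. Qed.

Lemma harm_mono n c : harmonic n <= harmonic (n + c).
Proof.
  induction c. rewrite Nat.add_0_r; lra.
  rewrite Nat.add_succ_r, harmonic_S.
  assert (0 < / INR (S (n + c))) by (apply Rinv_0_lt_compat, lt_0_INR; lia). lra.
Qed.

Lemma harm_diff_le_c n c : harmonic (n + c) - harmonic n <= harmonic c.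
Proof.
  induction c. rewrite Nat.add_0_r; simpl; lra.
  rewrite Nat.add_succ_r, !harmonic_S.
  assert (/ INR (S (n + c)) <= / INR (S c)).
  { apply Rinv_le_contravar. apply lt_0_INR; lia. apply le_INR; lia. }
  lra.
Qed.

Lemma harm_diff_le_frac n c : harmonic (n + c) - harmonic n <= INR c / (INR n + 1).
Proof.
  induction c. rewrite Nat.add_0_r; simpl. unfold Rdiv; rewrite Rmult_0_l; lra.
  rewrite Nat.add_succ_r, !harmonic_S.
  assert (/ INR (S (n + c)) <= / (INR n + 1)).
  { apply Rinv_le_contravar. pose proof (pos_INR n); lra. rewrite <- S_INR. apply le_INR; lia. }
  rewrite <- S_INR in *. rewrite (S_INR c). unfold Rdiv in *. rewrite Rmult_plus_distr_r, Rmult_1_l. lra.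
Qed.

Lemma harm_le_n n : harmonic n <= INR n.
Proof.
  induction n. simpl; lra.
  assert (/ INR (S n) <= 1).
  { rewrite <- Rinv_1. apply Rinv_le_contravar. lra. rewrite S_INR; pose proof (pos_INR n); lra. }
  rewrite harmonic_S. pose proof (S_INR n). lra.
Qed.

Lemma harm_nonneg n : 0 <= harmonic n.
Proof. pose proof (harm_mono 0 n). simpl in H. exact H. Qed.

Lemma harm_ln_upper n c : (1 <= n)%nat ->
  harmonic (n + c) - harmonic n <= ln (INR (n + c)) - ln (INR n).
Proof.
  intros Hn. induction c. rewrite Nat.add_0_r; lra.
  rewrite Nat.add_succ_r, harmonic_S.
  assert (/ INR (S (n + c)) <= ln (INR (S (n+c))) - ln (INR (n+c))).
  { set (k := INR (n + c)). assert (Hk : 1 <= k) by (unfold k; apply (le_INR 1); lia).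
    rewrite S_INR. fold k.
    pose proof (ln_le_sub1 (k / (k+1)) ltac:(apply Rdiv_lt_0_compat; lra)).
    rewrite ln_div in H by lra.
    assert (k / (k+1) - 1 = - / (k+1)) by (field; lra). lra. }
  lra.
Qed.

Lemma harm_ln_lower n c :
  ln (INR (n + c + 1)) - ln (INR (n + 1)) <= harmonic (n + c) - harmonic n.
Proof.
  induction c. rewrite Nat.add_0_r; lra.
  replace (n + S c + 1)%nat with (S (S (n + c))) by lia.
  replace (n + S c)%nat with (S (n + c)) by lia.
  replace (n + c + 1)%nat with (S (n + c)) in IHc by lia.
  rewrite harmonic_S.
  assert (ln (INR (S (S (n+c)))) - ln (INR (S (n + c))) <= / INR (S (n + c))).
  { rewrite !S_INR. set (k := INR (n + c)). assert (Hk : 0 <= k) by (apply pos_INR).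
    pose proof (ln_le_sub1 ((k+1+1) / (k+1)) ltac:(apply Rdiv_lt_0_compat; lra)).
    rewrite ln_div in H by lra.
    assert ((k+1+1) / (k+1) - 1 = / (k+1)) by (field; lra). lra. }
  lra.
Qed.

Lemma D_ln2 n : Rabs (harmonic (n + n) - harmonic n - ln 2) <= / (INR n + 1).
Proof.
  destruct n.
  { simpl. rewrite Rplus_0_l, Rinv_1.
    pose proof (ln_le_sub1 2 ltac:(lra)). pose proof ln_lt_2.
    rewrite Rabs_left1; lra. }
  set (N := S n).
  pose proof (harm_ln_upper N N ltac:(unfold N; lia)).
  pose proof (harm_ln_lower N N).
  assert (HN : 1 <= INR N) by (apply (le_INR 1); unfold N; lia).
  rewrite plus_INR in H, H0. rewrite !plus_INR in H0. change (INR 1) with 1 in H0.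
  set (x := INR N) in *.
  replace (x + x) with (2 * x) in H by ring. rewrite ln_mult in H by lra.
  assert (L: ln (x + x + 1) - ln (x + 1) - ln 2 >= - / (x+1)).
  { replace (x + x + 1) with (2 * ((2*x+1)/(2*x+2) * (x+1))) by (field; lra).
    assert (P1 : 0 < (2*x+1)/(2*x+2)) by (apply Rdiv_lt_0_compat; lra).
    rewrite ln_mult by (try apply Rmult_lt_0_compat; lra).
    rewrite ln_mult by lra.
    pose proof (ln_le_sub1 ((2*x+2)/(2*x+1)) ltac:(apply Rdiv_lt_0_compat; lra)).
    rewrite ln_div in H1 by lra. rewrite ln_div by lra.
    assert ((2 * x + 2) / (2 * x + 1) - 1 = / (2*x+1)) by (field; lra).
    assert (/ (2*x+1) <= / (x+1)) by (apply Rinv_le_contravar; lra).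
    lra. }
  unfold Rabs; destruct Rcase_abs; lra.
Qed.

Lemma lim_inv_n1 : is_lim_seq (fun n => / (INR n + 1)) 0.
Proof.
  assert (H : is_lim_seq (fun n => INR n + 1) p_infty).
  { eapply is_lim_seq_plus. apply is_lim_seq_INR. apply is_lim_seq_const. simpl. reflexivity. }
  apply is_lim_seq_inv in H. simpl in H. exact H. discriminate.
Qed.

Lemma lim_C_over C : is_lim_seq (fun n => C * / (INR n + 1)) 0.
Proof.
  replace (Finite 0) with (Rbar_mult C 0) by (simpl; f_equal; ring).
  apply is_lim_seq_scal_l, lim_inv_n1.
Qed.

Lemma squeeze0 (u : nat -> R) C :
  (forall n, Rabs (u n) <= C * / (INR n + 1)) -> is_lim_seq u 0.
Proof.
  intros H. apply is_lim_seq_le_le with (u := fun n => - (C * / (INR n + 1)))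
    (w := fun n => C * / (INR n + 1)).
  intros n; specialize (H n). apply Rabs_le_between in H. lra.
  apply is_lim_seq_ext with (u := fun n => (-C) * / (INR n + 1)). intros; ring.
  apply lim_C_over. apply lim_C_over.
Qed.

Lemma sum_range_Sl c n f : sum_range c (S n) f = f c + sum_range (S c) n f.
Proof. reflexivity. Qed.

Lemma sum_range_0 c f : sum_range c 0 f = 0.
Proof. reflexivity. Qed.

Lemma sum_range_Sr c n f : sum_range c (S n) f = sum_range c n f + f (c + n)%nat.
Proof.
  revert c. induction n; intros c.
  - rewrite Nat.add_0_r. unfold sum_range; simpl; ring.
  - rewrite sum_range_Sl, IHn, sum_range_Sl. replace (S c + n)%nat with (c + S n)%nat by lia. ring.
Qed.

Lemma sum_range_ext_in c n f g : (forall q, (c <= q < c + n)%nat -> f q = g q) ->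
  sum_range c n f = sum_range c n g.
Proof.
  revert c. induction n; intros c H. reflexivity.
  rewrite !sum_range_Sl. rewrite (H c) by lia. rewrite (IHn (S c)). reflexivity.
  intros q Hq; apply H; lia.
Qed.

Lemma sum_range_plus c n f g :
  sum_range c n (fun q => f q + g q) = sum_range c n f + sum_range c n g.
Proof.
  revert c. induction n; intros c. unfold sum_range; simpl; ring.
  rewrite !sum_range_Sl, IHn. ring.
Qed.

Lemma sum_range_scal c n k f :
  sum_range c n (fun q => k * f q) = k * sum_range c n f.
Proof.
  revert c. induction n; intros c. unfold sum_range; simpl; ring.
  rewrite !sum_range_Sl, IHn. ring.
Qed.

Lemma sum_range_tele c n g :
  sum_range (S c) n (fun q => g q - g (pred q)) = g (c + n)%nat - g c.
Proof.
  revert c. induction n; intros c. rewrite Nat.add_0_r; unfold sum_range; simpl; ring.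
  rewrite sum_range_Sl, IHn. simpl pred. replace (S c + n)%nat with (c + S n)%nat by lia. ring.
Qed.

Lemma sum_n_range f J : sum_n f J = sum_range 0 (S J) f.
Proof.
  induction J. rewrite sum_O. unfold sum_range; simpl. apply eq_sym, Rplus_0_r.
  rewrite sum_Sn, sum_range_Sr, <- IHJ. reflexivity.
Qed.

Lemma sum_n_Rplus (u v : nat -> R) n : sum_n (fun k => u k + v k) n = sum_n u n + sum_n v n.
Proof. apply (sum_n_plus u v n). Qed.

Lemma sum_n_Rscal (a : R) (u : nat -> R) n : sum_n (fun k => a * u k) n = a * sum_n u n.
Proof. apply (sum_n_mult_l a u n). Qed.

Lemma sum_range_sum_n c n (F : nat -> nat -> R) J :
  sum_range c n (fun q => sum_n (F q) J) = sum_n (fun i => sum_range c n (fun q => F q i)) J.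
Proof.
  revert c. induction n; intros c.
  - rewrite sum_range_0. symmetry. rewrite (sum_n_ext _ (fun _ => 0)) by reflexivity.
    rewrite sum_n_const; ring.
  - rewrite sum_range_Sl, IHn. rewrite <- sum_n_Rplus. apply sum_n_ext. intros; reflexivity.
Qed.

Lemma sum_range_lim c n (u : nat -> nat -> R) (l : nat -> R) :
  (forall q, (c <= q < c + n)%nat -> is_lim_seq (u q) (l q)) ->
  is_lim_seq (fun J => sum_range c n (fun q => u q J)) (sum_range c n l).
Proof.
  revert c. induction n; intros c H.
  - apply is_lim_seq_const.
  - apply is_lim_seq_plus'. apply H; lia. apply IHn. intros q Hq; apply H; lia.
Qed.

Definition w (s i : nat) : R := / (INR (2 * i + 1)) ^ s.

Lemma xi_eq i : INR (2 * i + 1) = 2 * INR i + 1.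
Proof. rewrite plus_INR, mult_INR. simpl. ring. Qed.

Lemma xi_ge1 i : 1 <= INR (2 * i + 1).
Proof. rewrite xi_eq. pose proof (pos_INR i). lra. Qed.

Lemma w_pos s i : 0 < w s i.
Proof. unfold w. apply Rinv_0_lt_compat, pow_lt. pose proof (xi_ge1 i); lra. Qed.

Lemma w_mono s t i : (s <= t)%nat -> w t i <= w s i.
Proof.
  intros H. unfold w. apply Rinv_le_contravar. apply pow_lt. pose proof (xi_ge1 i); lra.
  apply Rle_pow. apply xi_ge1. exact H.
Qed.

Lemma tele_sum N : sum_n (fun n => 2 * (/ (INR n + 1) - / (INR n + 2))) N = 2 * (1 - / (INR N + 2)).
Proof.
  induction N. rewrite sum_O. simpl. rewrite !Rplus_0_l, Rinv_1. reflexivity.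
  rewrite sum_Sn, IHN. change plus with Rplus. match goal with |- ?a = ?b => change (@eq R a b) end. rewrite S_INR. field.
  pose proof (pos_INR N). lra.
Qed.

Lemma ex_series_w2 : ex_series (w 2).
Proof.
  apply (ex_series_le (K:=R_AbsRing) (V:=R_CompleteNormedModule)) with (b := fun n => 2 * (/ (INR n + 1) - / (INR n + 2))).
  - intros n. change norm with Rabs. rewrite Rabs_pos_eq by (apply Rlt_le, w_pos).
    unfold w. rewrite xi_eq. pose proof (pos_INR n). set (x := INR n) in *.
    replace (2 * (/ (x + 1) - / (x + 2))) with (/ ((x+1)*(x+2)/2)) by (field; lra).
    apply Rinv_le_contravar. apply Rdiv_lt_0_compat; nra. simpl. nra.
  - exists 2. unfold is_series.
    change (is_lim_seq (sum_n (fun n => 2 * (/ (INR n + 1) - / (INR n + 2)))) 2).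
    apply is_lim_seq_ext with (u := fun N => 2 * (1 - / (INR (S N) + 1))).
    intros N. rewrite tele_sum, S_INR. f_equal. f_equal. f_equal. ring.
    replace (Finite 2) with (Rbar_mult 2 (1 - 0)) by (simpl; f_equal; ring).
    apply is_lim_seq_scal_l. apply is_lim_seq_minus'. apply is_lim_seq_const.
    apply (is_lim_seq_incr_1 (fun n => / (INR n + 1))). apply lim_inv_n1.
Qed.

Lemma ex_series_w s : (2 <= s)%nat -> ex_series (w s).
Proof.
  intros Hs. apply (ex_series_le (K:=R_AbsRing) (V:=R_CompleteNormedModule)) with (b := w 2). intros n. change norm with Rabs.
  rewrite Rabs_pos_eq by (apply Rlt_le, w_pos). apply w_mono; exact Hs.
  apply ex_series_w2.
Qed.

Definition lamJ s J := sum_n (w s) J.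

Lemma lam_lim s : (2 <= s)%nat -> is_lim_seq (lamJ s) (dlambda s).
Proof.
  intros Hs. pose proof (Series_correct _ (ex_series_w s Hs)). exact H.
Qed.

Lemma sum_range_const c n k : sum_range c n (fun _ => k) = INR n * k.
Proof.
  revert c; induction n; intros c. unfold sum_range; simpl; ring.
  rewrite sum_range_Sl, IHn, S_INR. ring.
Qed.

Definition phi (i j : nat) : R :=
  - / INR (2 * j + 1) + / (4 * (INR j - INR i)) + / (4 * (INR i + INR j + 1)).

Definition Kt (m i j : nat) : R :=
  if Nat.eq_dec i j then 0 else w (2 * m + 3) i * phi i j.

Definition Gt (m i j : nat) : R :=
  sum_range 1 m (fun q => w (2 * q + 1) i * w (2 * S (S m) - 2 * q - 1) j).

Lemma term_eq m X Y q : X <> 0 -> Y <> 0 -> (1 <= q <= m)%nat ->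
  / X ^ (2 * q + 1) * / Y ^ (2 * S (S m) - 2 * q - 1)
  = / (X ^ 3 * Y ^ (2 * m + 1)) * ((Y * Y * / (X * X)) ^ (pred q)).
Proof.
  intros HX HY Hq.
  destruct q as [|p]. lia.
  destruct (Nat.le_exists_sub (S p) m ltac:(lia)) as [d [Hd _]].
  replace (2 * S (S m) - 2 * S p - 1)%nat with (2 * d + 3)%nat by lia.
  subst m. simpl pred.
  replace (2 * S p + 1)%nat with (3 + 2 * p)%nat by lia.
  replace (2 * (d + S p) + 1)%nat with ((2 * d + 3) + 2 * p)%nat by lia.
  rewrite (Rpow_mult_distr (Y*Y) (/(X*X))), pow_inv.
  rewrite !pow_add, !pow_sqr.
  assert ((X*X)^p <> 0) by (apply pow_nonzero; apply Rmult_integral_contrapositive; tauto).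
  assert ((Y*Y)^p <> 0) by (apply pow_nonzero; apply Rmult_integral_contrapositive; tauto).
  assert (X^3 <> 0) by (apply pow_nonzero; auto).
  assert (Y^(2*d+3) <> 0) by (apply pow_nonzero; auto).
  field. repeat split; auto. all: apply pow_nonzero; apply Rmult_integral_contrapositive; tauto.
Qed.

Lemma geom_range m t : t <> 1 ->
  sum_range 1 m (fun q => t ^ (pred q)) = (t ^ m - 1) / (t - 1).
Proof.
  intros Ht.
  assert (H : sum_range 1 m (fun q => t ^ q - t ^ (pred q)) = t ^ m - 1).
  { rewrite (sum_range_tele 0 m (fun q => t ^ q)). simpl. ring. }
  rewrite (sum_range_ext_in 1 m (fun q => t ^ q - t ^ pred q) (fun q => (t - 1) * t ^ pred q)) in H.
  2:{ intros q Hq. destruct q. lia. simpl. ring. }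
  rewrite sum_range_scal in H. rewrite <- H. field. lra.
Qed.

Lemma Gt_diag m i : Gt m i i = INR m * w (2 * m + 4) i.
Proof.
  unfold Gt. rewrite <- (sum_range_const 1 m). apply sum_range_ext_in. intros q Hq.
  unfold w. rewrite <- Rinv_mult, <- pow_add. f_equal. f_equal. lia.
Qed.

Lemma Gt_off m i j : i <> j -> Gt m i j = Kt m i j + Kt m j i.
Proof.
  intros Hij. unfold Kt.
  destruct (Nat.eq_dec i j) as [e|_]. contradiction.
  destruct (Nat.eq_dec j i) as [e|_]. congruence.
  unfold Gt, w, phi.
  pose proof (xi_ge1 i) as Hx. pose proof (xi_ge1 j) as Hy.
  set (X := INR (2 * i + 1)) in *. set (Y := INR (2 * j + 1)) in *.
  assert (HX : X <> 0) by lra. assert (HY : Y <> 0) by lra.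
  rewrite (sum_range_ext_in _ _ _ (fun q => / (X ^ 3 * Y ^ (2 * m + 1)) * ((Y * Y * / (X * X)) ^ (pred q)))).
  2:{ intros q Hq. apply term_eq; auto. lia. }
  assert (HXY : X <> Y).
  { unfold X, Y. rewrite !xi_eq. intros E. apply Hij. apply INR_eq. lra. }
  assert (Ht : Y * Y * / (X * X) <> 1).
  { intros E. assert (Y * Y = X * X) by (rewrite <- (Rmult_1_l (X*X)), <- E; field; auto). nra. }
  rewrite sum_range_scal, geom_range by exact Ht.
  assert (EX : INR j - INR i = (Y - X) / 2) by (unfold X, Y; rewrite !xi_eq; field).
  assert (EY : INR i - INR j = (X - Y) / 2) by (unfold X, Y; rewrite !xi_eq; field).
  assert (E1 : INR i + INR j + 1 = (X + Y) / 2) by (unfold X, Y; rewrite !xi_eq; field).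
  assert (E2 : INR j + INR i + 1 = (X + Y) / 2) by (unfold X, Y; rewrite !xi_eq; field).
  rewrite EX, EY, E1, E2. fold X Y.
  replace (2 * m + 1)%nat with (2 * m + 1)%nat by reflexivity.
  rewrite !pow_add, !pow_sqr, !Rpow_mult_distr, !pow_inv.
  assert (X ^ m <> 0) by (apply pow_nonzero; auto).
  assert (Y ^ m <> 0) by (apply pow_nonzero; auto).
  assert (X + Y <> 0) by lra.
  assert (X - Y <> 0) by lra.
  assert (Y - X <> 0) by lra.
  assert (Y * Y - X * X <> 0) by (intros E; apply HXY; nra).
  rewrite (Rpow_mult_distr X X). match goal with |- ?a = ?b => change (@eq R a b) end. field. repeat split; auto.
Qed.

Definition QJ (m J : nat) : R :=
  sum_range 1 m (fun q => lamJ (2 * q + 1) J * lamJ (2 * S (S m) - 2 * q - 1) J).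

Definition Dt (m i j : nat) : R := if Nat.eq_dec i j then INR m * w (2 * m + 4) i else 0.

Lemma Gt_split m i j : Gt m i j = Dt m i j + (Kt m i j + Kt m j i).
Proof.
  unfold Dt. destruct (Nat.eq_dec i j) as [e|n].
  - subst j. rewrite Gt_diag. unfold Kt. destruct (Nat.eq_dec i i); [|congruence]. ring.
  - rewrite Gt_off by exact n. ring.
Qed.

Lemma prod_sums (p r J : nat) :
  lamJ p J * lamJ r J = sum_n (fun i => sum_n (fun j => w p i * w r j) J) J.
Proof.
  unfold lamJ. rewrite <- (sum_n_mult_r (K:=R_Ring)). apply sum_n_ext. intros i.
  rewrite <- (sum_n_mult_l (K:=R_Ring)). reflexivity.
Qed.

Lemma sum_ind_gt (c : R) i J : (J < i)%nat ->
  sum_n (fun j => if Nat.eq_dec i j then c else 0) J = 0.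
Proof.
  induction J; intros H.
  - rewrite sum_O. destruct (Nat.eq_dec i 0). lia. reflexivity.
  - rewrite sum_Sn, IHJ by lia. destruct (Nat.eq_dec i (S J)). lia.
    change plus with Rplus. apply Rplus_0_r.
Qed.

Lemma sum_ind (c : R) i J : (i <= J)%nat ->
  sum_n (fun j => if Nat.eq_dec i j then c else 0) J = c.
Proof.
  induction J; intros H.
  - rewrite sum_O. destruct (Nat.eq_dec i 0). reflexivity. lia.
  - rewrite sum_Sn. change plus with Rplus. destruct (Nat.eq_dec i (S J)).
    + rewrite sum_ind_gt by lia. apply Rplus_0_l.
    + rewrite IHJ by lia. apply Rplus_0_r.
Qed.

Lemma Q_expand m J :
  QJ m J = INR m * lamJ (2 * m + 4) J + 2 * sum_n (fun i => sum_n (Kt m i) J) J.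
Proof.
  unfold QJ.
  rewrite (sum_range_ext_in 1 m _ (fun q => sum_n (fun i => sum_n (fun j =>
     w (2 * q + 1) i * w (2 * S (S m) - 2 * q - 1) j) J) J)).
  2:{ intros q _. apply prod_sums. }
  rewrite sum_range_sum_n.
  rewrite (sum_n_ext _ (fun i => sum_n (fun j => Gt m i j) J)).
  2:{ intros i. rewrite sum_range_sum_n. reflexivity. }
  rewrite (sum_n_ext _ (fun i => sum_n (fun j => Dt m i j) J + (sum_n (Kt m i) J + sum_n (fun j => Kt m j i) J))).
  2:{ intros i. rewrite <- !sum_n_Rplus. apply sum_n_ext. intros j. apply Gt_split. }
  rewrite !sum_n_Rplus.
  rewrite (sum_n_switch (G:=R_AbelianMonoid) (fun i j => Kt m j i)).
  rewrite (sum_n_ext_loc (fun i => sum_n (fun j => Dt m i j) J) (fun i => INR m * w (2*m+4) i)).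
  2:{ intros i Hi. unfold Dt. apply sum_ind. exact Hi. }
  rewrite sum_n_Rscal. unfold lamJ. replace (sum_n (fun j => sum_n (fun i => Kt m j i) J) J) with (sum_n (fun i => sum_n (Kt m i) J) J) by reflexivity. match goal with |- ?a = ?b => change (@eq R a b) end. ring.
Qed.

Definition hJ (i J : nat) : R := sum_n (fun j => if Nat.eq_dec i j then 0 else phi i j) J.

Definition eJ (J i : nat) : R :=
  (harmonic (J - i) + harmonic (J + i + 1)) / 4 + harmonic (J + 1) / 2 - harmonic (2 * J + 2).

Lemma Kt_sum m i J : sum_n (Kt m i) J = w (2 * m + 3) i * hJ i J.
Proof.
  unfold hJ. rewrite <- (sum_n_mult_l (K:=R_Ring)). apply sum_n_ext. intros j.
  unfold Kt. destruct (Nat.eq_dec i j). symmetry; apply Rmult_0_r. reflexivity.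
Qed.

Lemma sa n c : sum_range c n (fun j => / (4 * (INR j - INR (c + n)))) = - harmonic n / 4.
Proof.
  revert c. induction n; intros c. unfold sum_range; simpl. field.
  rewrite sum_range_Sl. replace (c + S n)%nat with (S c + n)%nat by lia.
  rewrite IHn, harmonic_S. rewrite !plus_INR, !S_INR. field.
  pose proof (pos_INR n). lra.
Qed.

Lemma sb n c : sum_range 0 n (fun j => / (4 * (INR c + INR j + 1))) = (harmonic (c + n) - harmonic c) / 4.
Proof.
  induction n. rewrite Nat.add_0_r. unfold sum_range; simpl. field.
  rewrite sum_range_Sr, IHn. replace (c + S n)%nat with (S (c + n)) by lia.
  rewrite harmonic_S. simpl (0 + n)%nat. rewrite S_INR, plus_INR. field.
  pose proof (pos_INR n). pose proof (pos_INR c). lra.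
Qed.

Lemma sc n : sum_range 0 n (fun j => / INR (2 * j + 1)) = harmonic (2 * n) - harmonic n / 2.
Proof.
  induction n. unfold sum_range; simpl. field.
  rewrite sum_range_Sr, IHn. simpl (0 + n)%nat.
  replace (2 * S n)%nat with (S (S (2 * n))) by lia.
  rewrite !harmonic_S. replace (2 * n + 1)%nat with (S (2 * n)) by lia.
  rewrite !S_INR, mult_INR. simpl (INR 2). field.
  pose proof (pos_INR n). lra.
Qed.

Lemma hJ_base i : hJ i i = - 3 * harmonic (2 * i) / 4.
Proof.
  unfold hJ. rewrite sum_n_range, sum_range_Sr. simpl (0 + i)%nat.
  destruct (Nat.eq_dec i i); [|congruence]. rewrite Rplus_0_r.
  rewrite (sum_range_ext_in 0 i _ (fun j => - / INR (2 * j + 1) + / (4 * (INR j - INR (0 + i))) + / (4 * (INR i + INR j + 1)))).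
  2:{ intros j Hj. destruct (Nat.eq_dec i j). lia. unfold phi. reflexivity. }
  rewrite !sum_range_plus.
  rewrite (sum_range_ext_in 0 i (fun j => - / INR (2 * j + 1)) (fun j => (-1) * / INR (2 * j + 1))) by (intros; ring).
  rewrite sum_range_scal, sc, sa, sb.
  replace (i + i)%nat with (2 * i)%nat by lia. field.
Qed.

Lemma hJ_closed i d :
  hJ i (i + d) = - harmonic i / 2 + 3 / (4 * INR (2 * i + 1)) + eJ (i + d) i.
Proof.
  induction d.
  - rewrite Nat.add_0_r, hJ_base. unfold eJ. rewrite Nat.sub_diag.
    replace (i + i + 1)%nat with (S (2 * i)) by lia.
    replace (2 * i + 2)%nat with (S (S (2 * i))) by lia.
    replace (i + 1)%nat with (S i) by lia.
    rewrite !harmonic_S. replace (2 * i + 1)%nat with (S (2 * i)) by lia.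
    rewrite !S_INR, mult_INR. simpl (INR 2). simpl harmonic.
    field. pose proof (pos_INR i). lra.
  - replace (i + S d)%nat with (S (i + d)) by lia.
    unfold hJ. rewrite sum_Sn. fold (hJ i (i + d)). rewrite IHd.
    destruct (Nat.eq_dec i (S (i + d))). lia.
    change plus with Rplus. unfold eJ, phi.
    replace (S (i + d) - i)%nat with (S d) by lia.
    replace (i + d - i)%nat with d by lia.
    replace (S (i + d) + i + 1)%nat with (S (i + d + i + 1)) by lia.
    replace (S (i + d) + 1)%nat with (S (i + d + 1)) by lia.
    replace (2 * S (i + d) + 2)%nat with (S (S (2 * (i + d) + 2))) by lia.
    rewrite !harmonic_S.
    replace (2 * S (i + d) + 1)%nat with (S (2 * (i + d) + 2)) by lia.
    rewrite !S_INR, !plus_INR, !mult_INR, !S_INR, !plus_INR. simpl (INR 2). simpl (INR 1).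
    pose proof (pos_INR i). pose proof (pos_INR d).
    match goal with |- ?a = ?b => change (@eq R a b) end.
    rewrite ?INR_0. field. repeat split; lra.
Qed.

Lemma sum_n_mono (g : nat -> R) J k : (forall i, 0 <= g i) -> sum_n g J <= sum_n g (J + k).
Proof.
  intros Hg. induction k. rewrite Nat.add_0_r; lra.
  rewrite Nat.add_succ_r, sum_Sn. change plus with Rplus. specialize (Hg (S (J + k))). lra.
Qed.

Lemma sum_le_Series (g : nat -> R) J : (forall i, 0 <= g i) -> ex_series g -> sum_n g J <= Series g.
Proof.
  intros Hg He. pose proof (Series_correct _ He) as HS.
  assert (H2 : is_lim_seq (fun n => sum_n g (n + J)) (Series g)).
  { apply (is_lim_seq_incr_n (sum_n g) J). exact HS. }
  assert (H3 := is_lim_seq_le (fun _ => sum_n g J) (fun n => sum_n g (n + J)) (sum_n g J) (Series g)).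
  simpl in H3. apply H3. intros n. rewrite Nat.add_comm. apply sum_n_mono; auto.
  apply is_lim_seq_const. exact H2.
Qed.

Lemma sum_n_lim (u : nat -> nat -> R) (l : nat -> R) N :
  (forall i, is_lim_seq (fun J => u J i) (l i)) ->
  is_lim_seq (fun J => sum_n (u J) N) (sum_n l N).
Proof.
  intros H. induction N.
  - apply is_lim_seq_ext with (u := fun J => u J 0%nat). intros; rewrite sum_O; reflexivity.
    rewrite sum_O. apply H.
  - rewrite sum_Sn. apply is_lim_seq_ext with (u := fun J => sum_n (u J) N + u J (S N)).
    intros; rewrite sum_Sn; reflexivity. apply is_lim_seq_plus'; auto.
Qed.

Lemma sum_n_Rminus (u v : nat -> R) n : sum_n (fun k => u k - v k) n = sum_n u n - sum_n v n.
Proof.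
  induction n. rewrite !sum_O. reflexivity.
  rewrite !sum_Sn, IHn. change plus with Rplus.
  match goal with |- ?a = ?b => change (@eq R a b) end. ring.
Qed.

Lemma dom_conv (f : nat -> nat -> R) (L g : nat -> R) :
  (forall J i, Rabs (f J i) <= g i) ->
  (forall i, Rabs (L i) <= g i) ->
  ex_series g ->
  (forall i, is_lim_seq (fun J => f J i) (L i)) ->
  is_lim_seq (fun J => sum_n (f J) J) (Series L).
Proof.
  intros Hf HL Hg Hlim.
  assert (Hg0 : forall i, 0 <= g i) by (intros i; specialize (HL i); pose proof (Rabs_pos (L i)); lra).
  assert (HeL : ex_series L).
  { apply (ex_series_le (K:=R_AbsRing) (V:=R_CompleteNormedModule)) with (b := g); auto. }
  assert (HSL := Series_correct _ HeL).
  apply is_lim_seq_ext with (u := fun J => (sum_n (f J) J - sum_n L J) + sum_n L J).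
  intros; ring.
  replace (Series L) with (0 + Series L) by ring.
  apply is_lim_seq_plus'; [| exact HSL].
  apply is_lim_seq_spec. intros eps.
  assert (HT : is_lim_seq (fun N => Series g - sum_n g N) 0).
  { replace (Finite 0) with (Finite (Series g - Series g)) by (f_equal; ring).
    apply is_lim_seq_minus'. apply is_lim_seq_const. apply (Series_correct _ Hg). }
  apply is_lim_seq_spec in HT. destruct (HT (mkposreal (eps/4) ltac:(destruct eps; simpl; lra))) as [N HN].
  specialize (HN N (le_n N)). simpl in HN.
  assert (HA := sum_n_lim (fun J i => f J i - L i) (fun _ => 0) N).
  assert (HA' : is_lim_seq (fun J => sum_n (fun i => f J i - L i) N) 0).
  { replace (Finite 0) with (Finite (sum_n (fun _ : nat => 0) N)).
    apply HA. intros i. replace (Finite 0) with (Finite (L i - L i)) by (f_equal; ring).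
    apply is_lim_seq_minus'. apply Hlim. apply is_lim_seq_const.
    f_equal. rewrite sum_n_const. match goal with |- ?a = ?b => change (@eq R a b) end. ring. }
  apply is_lim_seq_spec in HA'. destruct (HA' (mkposreal (eps/2) ltac:(destruct eps; simpl; lra))) as [N2 HN2].
  exists (max N N2). intros J HJ.
  specialize (HN2 J ltac:(lia)). simpl in HN2. rewrite Rminus_0_r in HN2 |- *.
  assert (Hsplit : sum_n (f J) J - sum_n L J =
     sum_n (fun i => f J i - L i) N + sum_n_m (fun i => f J i - L i) (S N) J).
  { assert (E1 : sum_n (f J) J - sum_n L J = sum_n (fun i => f J i - L i) J).
    { symmetry; apply sum_n_Rminus. }
    rewrite E1. rewrite (sum_n_m_sum_n (G:=R_AbelianGroup)) by lia. change minus with Rminus.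
    match goal with |- _ = _ + (?x - ?y) => change x with (sum_n (fun i => f J i - L i) J); change y with (sum_n (fun i => f J i - L i) N) end.
    match goal with |- ?a = ?b => change (@eq R a b) end. symmetry; apply Rplus_minus. }
  rewrite Hsplit.
  assert (Hb : Rabs (sum_n_m (fun i => f J i - L i) (S N) J) <= 2 * (Series g - sum_n g N)).
  { eapply Rle_trans. apply (norm_sum_n_m (K:=R_AbsRing) (V:=R_NormedModule)).
    eapply Rle_trans. apply sum_n_m_le with (b := fun i => 2 * g i).
    { intros k. change norm with Rabs. unfold Rminus. eapply Rle_trans. apply Rabs_triang.
      rewrite Rabs_Ropp. specialize (Hf J k). specialize (HL k). lra. }
    replace (sum_n_m (fun i => 2 * g i) (S N) J) with (2 * sum_n_m g (S N) J)
      by (symmetry; apply (sum_n_m_mult_l (K:=R_Ring))).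
    apply Rmult_le_compat_l. lra.
    rewrite (sum_n_m_sum_n (G:=R_AbelianGroup)) by lia. change minus with Rminus.
    match goal with |- ?x - ?y <= _ => change x with (sum_n g J); change y with (sum_n g N) end.
    pose proof (sum_le_Series g J Hg0 Hg). lra. }
  eapply Rle_lt_trans. apply Rabs_triang.
  rewrite Rabs_pos_eq in HN by (pose proof (sum_le_Series g N Hg0 Hg); lra).
  lra.
Qed.

Lemma e_bound J i : (i <= J)%nat -> Rabs (eJ J i) <= harmonic i / 4 + 2.
Proof.
  intros H. unfold eJ.
  destruct (Nat.le_exists_sub i J H) as [n [Hn _]].
  replace (J - i)%nat with n by lia.
  pose proof (harm_diff_le_c n i) as F1. pose proof (harm_mono n i) as F1'.
  replace (n + i)%nat with J in F1, F1' by lia.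
  pose proof (harm_mono J (i + 1)) as F2. replace (J + (i + 1))%nat with (J + i + 1)%nat in F2 by lia.
  pose proof (harm_mono (J + i + 1) (J - i + 1)) as F2'.
  replace (J + i + 1 + (J - i + 1))%nat with (2 * J + 2)%nat in F2' by lia.
  pose proof (harm_mono J 1) as F3.
  pose proof (harm_mono (J + 1) (J + 1)) as F3'.
  replace (J + 1 + (J + 1))%nat with (2 * J + 2)%nat in F3' by lia.
  pose proof (harm_diff_le_frac J (J + 2)) as F4.
  replace (J + (J + 2))%nat with (2 * J + 2)%nat in F4 by lia.
  assert (INR (J + 2) / (INR J + 1) <= 2).
  { rewrite plus_INR. simpl (INR 2). pose proof (pos_INR J).
    apply Rmult_le_reg_r with (INR J + 1). lra. unfold Rdiv. rewrite Rmult_assoc, Rinv_l by lra. lra. }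
  apply Rabs_le. lra.
Qed.

Lemma e_lim i : is_lim_seq (fun J => eJ J i) (- ln 2).
Proof.
  apply (is_lim_seq_incr_n _ i).
  apply is_lim_seq_ext with (u := fun n => (eJ (n + i) i + ln 2) + (- ln 2)). intros; ring.
  replace (Finite (- ln 2)) with (Finite (0 + - ln 2)) by (f_equal; ring).
  apply is_lim_seq_plus'; [|apply is_lim_seq_const].
  apply squeeze0 with (C := INR i + 4). intros n.
  set (J := (n + i)%nat).
  set (t := / (INR n + 1)).
  assert (Ht : 0 < t) by (unfold t; apply Rinv_0_lt_compat; pose proof (pos_INR n); lra).
  assert (HtJ : / (INR J + 1) <= t).
  { unfold t, J. apply Rinv_le_contravar. pose proof (pos_INR n); lra. rewrite plus_INR. pose proof (pos_INR i). lra. }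
  assert (HtJ2 : / (INR (2 * J) + 1) <= t).
  { unfold t, J. apply Rinv_le_contravar. pose proof (pos_INR n); lra. rewrite mult_INR, plus_INR. pose proof (pos_INR i). pose proof (pos_INR n). simpl (INR 2). lra. }
  unfold eJ. replace (J - i)%nat with n by (unfold J; lia).
  pose proof (harm_diff_le_frac n i) as P1. pose proof (harm_mono n i) as P1'.
  fold J in P1, P1'. unfold Rdiv in P1. fold t in P1.
  pose proof (harm_diff_le_frac J (i + 1)) as P2. pose proof (harm_mono J (i + 1)) as P2'.
  replace (J + (i + 1))%nat with (J + i + 1)%nat in P2, P2' by lia.
  assert (P2b : INR (i + 1) / (INR J + 1) <= (INR i + 1) * t).
  { rewrite plus_INR. simpl (INR 1). unfold Rdiv. apply Rmult_le_compat_l. pose proof (pos_INR i); lra. exact HtJ. }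
  pose proof (harm_diff_le_frac J 1) as P3. pose proof (harm_mono J 1) as P3'.
  assert (P3b : INR 1 / (INR J + 1) <= t).
  { simpl (INR 1). unfold Rdiv. rewrite Rmult_1_l. exact HtJ. }
  pose proof (harm_diff_le_frac (2 * J) 2) as P4. pose proof (harm_mono (2 * J) 2) as P4'.
  replace (2 * J + 2)%nat with (2 * J + 2)%nat in P4 by reflexivity.
  assert (P4b : INR 2 / (INR (2 * J) + 1) <= 2 * t).
  { simpl (INR 2). unfold Rdiv. apply Rmult_le_compat_l; lra. }
  pose proof (D_ln2 J) as P5. replace (J + J)%nat with (2 * J)%nat in P5 by lia.
  apply Rabs_le_between in P5.
  pose proof (pos_INR i).
  apply Rabs_le. split; nra.
Qed.

Lemma w_succ s i : w (S s) i * INR (2 * i + 1) = w s i.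
Proof.
  unfold w. change (INR (2 * i + 1) ^ S s) with (INR (2 * i + 1) * INR (2 * i + 1) ^ s). pose proof (xi_ge1 i).
  assert (INR (2 * i + 1) ^ s <> 0) by (apply pow_nonzero; lra). field. split; lra.
Qed.

Definition SJ (m J : nat) : R := sum_n (fun i => w (2 * m + 3) i * harmonic i) J.

Lemma SJ_identity m J :
  SJ m J = (INR m + 3 / 2) * lamJ (2 * m + 4) J
           + 2 * sum_n (fun i => w (2 * m + 3) i * eJ J i) J - QJ m J.
Proof.
  rewrite Q_expand.
  rewrite (sum_n_ext_loc (fun i => sum_n (Kt m i) J)
    (fun i => (-1/2) * (w (2 * m + 3) i * harmonic i) + ((3/4) * w (2 * m + 4) i + w (2 * m + 3) i * eJ J i))).
  2:{ intros i Hi. rewrite Kt_sum.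
      destruct (Nat.le_exists_sub i J Hi) as [d [Hd _]].
      replace J with (i + d)%nat by lia. rewrite hJ_closed.
      rewrite <- (w_succ (2 * m + 3) i). replace (S (2 * m + 3)) with (2 * m + 4)%nat by lia.
      pose proof (xi_ge1 i).
      match goal with |- ?a = ?b => change (@eq R a b) end. field. lra. }
  rewrite !sum_n_Rplus, !sum_n_Rscal. unfold SJ, lamJ.
  set (A := sum_n (fun i => w (2*m+3) i * harmonic i) J) in *. set (B := sum_n (w (2*m+4)) J) in *. set (C := sum_n (fun i => w (2*m+3) i * eJ J i) J) in *. clearbody A B C. change R in A. change R in B. change R in C. match goal with |- ?a = ?b => change (@eq R a b) end. field.
Qed.

Lemma sum_range_shift c n f : sum_range (S c) n f = sum_range c n (fun k => f (S k)).
Proof.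
  revert c; induction n; intros c. reflexivity.
  rewrite !sum_range_Sl, IHn. reflexivity.
Qed.

Lemma sum_n_shift (u : nat -> R) J : sum_n u (S J) = u 0%nat + sum_n (fun k => u (S k)) J.
Proof.
  rewrite !sum_n_range, sum_range_Sl, sum_range_shift. reflexivity.
Qed.

Lemma ex_series_2w2 : ex_series (fun i => 2 * w 2 i).
Proof.
  destruct ex_series_w2 as [l Hl]. exists (2 * l).
  apply (is_series_scal_l (K:=R_AbsRing) (V:=R_NormedModule) 2 (w 2) l Hl).
Qed.

Lemma e_sum_lim m :
  is_lim_seq (fun J => sum_n (fun i => w (2 * m + 3) i * eJ J i) J) (- ln 2 * dlambda (2 * m + 3)).
Proof.
  set (s := (2 * m + 3)%nat).
  set (f := fun J i => if Compare_dec.le_dec i J then w s i * eJ J i else 0).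
  set (g := fun i => (harmonic i / 4 + 2) * w s i).
  assert (Hg0 : forall i, 0 <= g i).
  { intros i. unfold g. pose proof (harm_nonneg i). pose proof (w_pos s i). nra. }
  assert (Hln : 0 < ln 2 <= 1) by (pose proof ln_lt_2; pose proof (ln_le_sub1 2 ltac:(lra)); lra).
  assert (HD := dom_conv f (fun i => - ln 2 * w s i) g).
  unfold dlambda. fold (w s).
  replace (- ln 2 * Series (w s)) with (Series (fun i => - ln 2 * w s i)) by apply Series_scal_l.
  apply is_lim_seq_ext with (u := fun J => sum_n (f J) J).
  { intros J. apply sum_n_ext_loc. intros i Hi. unfold f. destruct (Compare_dec.le_dec i J). reflexivity. lia. }
  apply HD.
  - intros J i. unfold f. destruct (Compare_dec.le_dec i J).
    + rewrite Rabs_mult, Rabs_pos_eq by (apply Rlt_le, w_pos). unfold g. rewrite Rmult_comm.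
      apply Rmult_le_compat_r. apply Rlt_le, w_pos. apply e_bound; exact l.
    + rewrite Rabs_R0. apply Hg0.
  - intros i. rewrite Rabs_mult, Rabs_Ropp, !Rabs_pos_eq by (try apply Rlt_le, w_pos; lra).
    unfold g. apply Rmult_le_compat_r. apply Rlt_le, w_pos. pose proof (harm_nonneg i). lra.
  - apply (ex_series_le (K:=R_AbsRing) (V:=R_CompleteNormedModule)) with (b := fun i => 2 * w 2 i).
    2: apply ex_series_2w2.
    intros i. change norm with Rabs. rewrite Rabs_pos_eq by apply Hg0. unfold g.
    pose proof (harm_le_n i). pose proof (pos_INR i).
    pose proof (w_succ (2 * m + 2) i) as Ew. replace (S (2 * m + 2)) with s in Ew by (unfold s; lia).
    pose proof (w_pos s i). rewrite xi_eq in Ew.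
    assert (w (2 * m + 2) i <= w 2 i) by (apply w_mono; lia).
    assert ((harmonic i / 4 + 2) * w s i <= (2 * (2 * INR i + 1)) * w s i) by (apply Rmult_le_compat_r; lra).
    lra.
  - intros i. apply is_lim_seq_ext_loc with (u := fun J => w s i * eJ J i).
    { exists i. intros J HJ. unfold f. destruct (Compare_dec.le_dec i J). reflexivity. lia. }
    replace (Finite (- ln 2 * w s i)) with (Rbar_mult (w s i) (- ln 2)) by (simpl; f_equal; ring).
    apply is_lim_seq_scal_l. apply e_lim.
Qed.

Theorem mainTheorem3 (a : nat) (ha : (2 <= a)%nat) :
  is_series (fun k : nat => harmonic (S k) / (INR (2 * (S k) + 1)) ^ (2 * a - 1))
    (- 2 * dlambda (2 * a - 1) * ln 2
     + (INR a - 1 / 2) * dlambda (2 * a)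
     - sum_range 1 (a - 2)
         (fun q => dlambda (2 * q + 1) * dlambda (2 * a - 2 * q - 1))).
Proof.
  destruct a as [|[|m]]; try lia.
  replace (2 * S (S m) - 1)%nat with (2 * m + 3)%nat by lia.
  replace (S (S m) - 2)%nat with m by lia.
  assert (HQ : is_lim_seq (QJ m) (sum_range 1 m (fun q => dlambda (2 * q + 1) * dlambda (2 * S (S m) - 2 * q - 1)))).
  { unfold QJ. apply (sum_range_lim 1 m (fun q J => lamJ (2 * q + 1) J * lamJ (2 * S (S m) - 2 * q - 1) J)).
    intros q Hq. apply is_lim_seq_mult'; apply lam_lim; lia. }
  assert (HS : is_lim_seq (SJ m) ((INR m + 3 / 2) * dlambda (2 * m + 4) + 2 * (- ln 2 * dlambda (2 * m + 3))
     - sum_range 1 m (fun q => dlambda (2 * q + 1) * dlambda (2 * S (S m) - 2 * q - 1)))).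
  { apply is_lim_seq_ext with (u := fun J => (INR m + 3 / 2) * lamJ (2 * m + 4) J
           + 2 * sum_n (fun i => w (2 * m + 3) i * eJ J i) J - QJ m J).
    intros J; symmetry; apply SJ_identity.
    apply is_lim_seq_minus'; [|exact HQ].
    apply is_lim_seq_plus'.
    - apply (is_lim_seq_scal_l _ (INR m + 3/2) (dlambda (2 * m + 4))). apply lam_lim; lia.
    - apply (is_lim_seq_scal_l _ 2 (- ln 2 * dlambda (2 * m + 3))). apply e_sum_lim. }
  apply (is_lim_seq_incr_1 (SJ m)) in HS.
  replace (2 * m + 4)%nat with (2 * S (S m))%nat in HS by lia.
  unfold is_series. change (is_lim_seq (sum_n (fun k => harmonic (S k) / INR (2 * S k + 1) ^ (2 * m + 3)))
    (- 2 * dlambda (2 * m + 3) * ln 2 + (INR (S (S m)) - 1 / 2) * dlambda (2 * S (S m)) -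
     sum_range 1 m (fun q => dlambda (2 * q + 1) * dlambda (2 * S (S m) - 2 * q - 1)))).
  replace (- 2 * dlambda (2 * m + 3) * ln 2 + (INR (S (S m)) - 1 / 2) * dlambda (2 * S (S m)) -
     sum_range 1 m (fun q => dlambda (2 * q + 1) * dlambda (2 * S (S m) - 2 * q - 1)))
    with ((INR m + 3 / 2) * dlambda (2 * S (S m)) + 2 * (- ln 2 * dlambda (2 * m + 3))
     - sum_range 1 m (fun q => dlambda (2 * q + 1) * dlambda (2 * S (S m) - 2 * q - 1)))
    by (rewrite !S_INR; field).
  apply is_lim_seq_ext with (u := fun J => SJ m (S J)). 2: exact HS.
  intros J. unfold SJ. rewrite sum_n_shift. simpl harmonic at 1. rewrite Rmult_0_r, Rplus_0_l.
  apply sum_n_ext. intros k. unfold w. unfold Rdiv. apply Rmult_comm.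
Qed.
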